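(* Consider the latent class MNL pricing model of the context. Then: (i) $\bar{\mathcal{R}}\le\beta_e\,\mathcal{R}^e\le\beta_e\,\mathcal{R}^*$, with no further conditions, where $\beta_e$ is $\beta_f$ for $f=e=(1,\dots,1)$. (ii) If for each $j\in M$ the price sensitivities $b_{kj}=b_j$ do not depend on $k\in N$, then the economic factor and the robust factor are both proportional to $e$ (so pricing along either is equivalent to uniform pricing). (iii) For every vector $f$ with positive components such that $d^j(\bar p^j)'f\le\min_{i\in N}f_i$ for all $j\in M$, we have $\bar{\mathcal{R}}\le\beta_f\,\mathcal{R}^f\le\beta_f\,\mathcal{R}^*$.
   Context: Products $N=\{1,\dots,n\}$, customer types $M=\{1,\dots,m\}$ with weights $\theta_j>0$, $\sum_j\theta_j=1$. For type $j$, with parameters $a_{ij}\in\mathbb{R}$ and $b_{ij}>0$, the demand for product $i$ at price vector $p$ is $$d_{ij}(p)=\frac{\exp(a_{ij}-b_{ij}p_i)}{1+\sum_{k\in N}\exp(a_{kj}-b_{kj}p_k)},$$ $d^j(p)$ is the vector $(d_{ij}(p))_{i\in N}$, and $R_j(p)=\sum_ip_id_{ij}(p)$. Standing assumption (A0): each $R_j$ attains its maximum $\mathcal{R}^*_j$ over $p\ge 0$ at a price vector $\bar p^j=(\bar p_{ij})_i$ with positive finite components. $\bar{\mathcal{R}}:=\sum_j\theta_j\mathcal{R}^*_j$; $R(p):=\sum_j\theta_jR_j(p)$; $\mathcal{R}^*:=\max_{p\ge0}R(p)$; for positive $f$, $\mathcal{R}^f:=\max_{q>0}R(qf)$ and $\beta_f:=1+\ln(q_{\max}/q_{\min})$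 with $q_{\min}=\min_{i,j}\bar p_{ij}/f_i$, $q_{\max}=\max_{i,j}\bar p_{ij}/f_i$. The economic factor is $f=\sum_j\alpha_j\bar p^j$ with $\alpha_j=\theta_j\mathcal{R}^*_j/\bar{\mathcal{R}}$; the robust factor is $f^*_i=\sqrt{p^L_ip^H_i}$ where $p^H_i=\max_j\bar p_{ij}$, $p^L_i=\min_j\bar p_{ij}$. *)

(* Defs.v *)
From HB Require Import structures.
From mathcomp Require Import all_boot all_order all_algebra.
From mathcomp Require Import all_classical all_reals all_analysis.
Set Implicit Arguments. Unset Strict Implicit. Unset Printing Implicit Defensive.
Import Order.TTheory GRing.Theory Num.Theory.
Local Open Scope classical_set_scope.
Local Open Scope ring_scope.

Section LatentMNL.
Variables (R : realType) (n m : nat).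
(* weights theta_j, parameters a_ij, b_ij (indexed a i j), optimal prices
   pbar j i = \bar p_{ij} *)
Variables (theta : 'I_m -> R) (a b : 'I_n -> 'I_m -> R) (pbar : 'I_m -> 'I_n -> R).

Definition demand (j : 'I_m) (p : 'I_n -> R) (i : 'I_n) : R :=
  expR (a i j - b i j * p i) /
    (1 + \sum_(k < n) expR (a k j - b k j * p k)).

Definition revj (j : 'I_m) (p : 'I_n -> R) : R := \sum_(i < n) p i * demand j p i.

Definition totrev (p : 'I_n -> R) : R := \sum_(j < m) theta j * revj j p.

(* R^*_j (maximum of R_j attained at pbar j under (A0)) *)
Definition Rstarj (j : 'I_m) : R := revj j (pbar j).

Definition Rbar : R := \sum_(j < m) theta j * Rstarj j.

Definition Rstar : R := sup [set totrev p | p in [set p | forall i, 0 <= p i]].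

Definition Rf (f : 'I_n -> R) : R :=
  sup [set totrev (fun i => q * f i) | q in [set q : R | 0 < q]].

Definition qmin (f : 'I_n -> R) : R :=
  inf [set x | exists (i : 'I_n) (j : 'I_m), x = pbar j i / f i].
Definition qmax (f : 'I_n -> R) : R :=
  sup [set x | exists (i : 'I_n) (j : 'I_m), x = pbar j i / f i].

Definition beta (f : 'I_n -> R) : R := 1 + ln (qmax f / qmin f).

Definition evec : 'I_n -> R := fun _ => 1.

Definition alpha (j : 'I_m) : R := theta j * Rstarj j / Rbar.
Definition econ_factor : 'I_n -> R := fun i => \sum_(j < m) alpha j * pbar j i.

Definition pH (i : 'I_n) : R := sup [set x | exists j : 'I_m, x = pbar j i].
Definition pL (i : 'I_n) : R := inf [set x | exists j : 'I_m, x = pbar j i].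
Definition robust_factor : 'I_n -> R := fun i => Num.sqrt (pL i * pH i).

End LatentMNL.

(* Main.v *)
Require Import Defs.
From HB Require Import structures.
From mathcomp Require Import all_boot all_order all_algebra.
From mathcomp Require Import all_classical all_reals all_analysis.
From mathcomp Require Import ring lra.
Import Order.TTheory GRing.Theory Num.Theory.
Local Open Scope ring_scope.


Section Gen.
Variable R : realType.
Lemma ln_ge1V (x : R) : 0 < x -> 1 - x^-1 <= ln x.
Proof.
move=> x0; have := expR_ge1Dx (- ln x).
by rewrite expRN lnK ?posrE // => h; rewrite lerBlDr addrC -lerBlDr.
Qed.

Lemma finmax (T : finType) (A : {set T}) (r : T -> R) t0 : t0 \in A ->
  exists2 t, t \in A & forall t', t' \in A -> r t' <= r t.
Proof.
move=> At0; case: (@arg_maxP _ _ T t0 (mem A) r At0) => t At H.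
by exists t => // t' /H.
Qed.

Lemma comb_gen (T : finType) (c r : T -> R) (L S : R) : 0 < L -> 0 <= S ->
  (forall t, 0 <= c t) -> (forall t, L <= r t) ->
  forall k (A : {set T}) (C M : R), (#|A| <= k)%N -> 0 <= C -> L <= M ->
  (forall t, t \in A -> r t <= M) ->
  (forall q, 0 < q -> q <= M -> q * (\sum_(t in A | q <= r t) c t + C) <= S) ->
  \sum_(t in A) c t * r t + C * M <= S * (1 + ln (M / L)).
Proof.
move=> L0 S0 c0 rL k; elim: k => [|k IH] A C M cardA C0 LM rM hyp;
  have M0 : 0 < M by apply: lt_le_trans LM.
all: have hCM : C * M <= S.
all: try (have := hyp M M0 (lexx _); rewrite mulrC => h; apply: le_trans h;
  by rewrite ler_wpM2r ?(ltW M0) // lerDr sumr_ge0).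
all: have hln : 0 <= ln (M / L) by apply: ln_ge0; rewrite ler_pdivlMr // mul1r.
all: have hS : S <= S * (1 + ln (M / L)) by rewrite -{1}[S]mulr1 ler_wpM2l // lerDl.
- have A0 : A = finset.set0 by apply/eqP; rewrite -cards_eq0 -leqn0.
  by rewrite A0 big_set0 add0r; apply: le_trans hS.
case: (set_0Vmem A) => [A0 | [t1 At1]].
  by rewrite A0 big_set0 add0r; apply: le_trans hS.
have [t0 At0 t0max] := @finmax _ A r t1 At1.
set M1 := r t0.
have LM1 : L <= M1 by apply: rL.
have M1M : M1 <= M by apply: rM.
have M10 : 0 < M1 by apply: lt_le_trans LM1.
have IH' := IH (A :\ t0) (C + c t0) M1.
have := IH'.
have -> : \sum_(t in A) c t * r t = c t0 * M1 + \sum_(t in A :\ t0) c t * r t.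
  by rewrite (big_setD1 t0).
move=> {IH'} IH'.
have H1 : \sum_(t in A :\ t0) c t * r t + (C + c t0) * M1 <= S * (1 + ln (M1 / L)).
  apply: IH'.
  - by move: cardA; rewrite (cardsD1 t0) At0 add1n ltnS.
  - by rewrite addr_ge0.
  - exact: LM1.
  - by move=> t; rewrite in_setD1 => /andP[_ /t0max].
  move=> q q0 qM1.
  have -> : \sum_(t in A :\ t0 | q <= r t) c t + (C + c t0)
           = \sum_(t in A | q <= r t) c t + C.
    rewrite big_mkcondr [in RHS]big_mkcondr /= (big_setD1 t0 At0) /= qM1.
    by rewrite addrC -addrA [C + _]addrC addrA.
  by apply: hyp => //; apply: le_trans M1M.
have H2 : C * M - C * M1 <= S * ln (M / M1).
  have h := @ln_ge1V _ (divr_gt0 M0 M10).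
  have e : C * M - C * M1 = (C * M) * (1 - (M / M1)^-1).
    by rewrite invf_div mulrBr mulr1; congr (_ - _); field; apply/lt0r_neq0.
  rewrite e; apply: le_trans (ler_wpM2l S0 h).
  rewrite ler_wpM2r // subr_ge0 invf_div ler_pdivrMr // mul1r //.
have H3 : ln (M / L) = ln (M / M1) + ln (M1 / L).
  rewrite -lnM ?posrE ?divr_gt0 //; congr ln; field.
  by apply/andP; split; apply/lt0r_neq0.
rewrite H3; move: H1 H2; rewrite !mulrDr !mulrDl.
lra.
Qed.
End Gen.

Section Fin.
Variable R : realType.
Local Open Scope classical_set_scope.
Lemma sup_maxel (E : set R) x0 : E x0 -> (forall x, E x -> x <= x0) -> sup E = x0.
Proof.
move=> Ex0 ub; apply/le_anti/andP; split.
  by apply: ge_sup; [exists x0 | move=> x /ub].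
by apply: (ub_le_sup); [exists x0 => x /ub|].
Qed.

Lemma inf_minel (E : set R) x0 : E x0 -> (forall x, E x -> x0 <= x) -> inf E = x0.
Proof.
move=> Ex0 lb; apply/le_anti/andP; split.
  by apply: ge_inf; [exists x0 => x /lb|].
by apply: lb_le_inf; [exists x0 | move=> x /lb].
Qed.

Lemma inf_fin (T : finType) (g : T -> R) (t0 : T) :
  exists t, inf [set x | exists t', x = g t'] = g t /\ forall t', g t <= g t'.
Proof.
case: (@arg_minP _ _ T t0 predT g isT) => t _ H.
exists t; split; last by move=> t'; apply: H.
by apply: inf_minel; [exists t | move=> x [t' ->]; apply: H].
Qed.

Lemma sup_fin (T : finType) (g : T -> R) (t0 : T) :
  exists t, sup [set x | exists t', x = g t'] = g t /\ forall t', g t' <= g t.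
Proof.
case: (@arg_maxP _ _ T t0 predT g isT) => t _ H.
exists t; split; last by move=> t'; apply: H.
by apply: sup_maxel; [exists t | move=> x [t' ->]; apply: H].
Qed.

Lemma set2E (I J : Type) (h : I -> J -> R) :
  [set x | exists i j, x = h i j] = [set x | exists t : I * J, x = h t.1 t.2].
Proof.
apply/seteqP; split => x /=.
  by move=> [i [j ->]]; exists (i, j).
by move=> [[i j] ->]; exists i, j.
Qed.
End Fin.

Section MNL.
Variables (R : realType) (n m : nat) (a b : 'I_n -> 'I_m -> R).
Hypothesis hb : forall i j, 0 < b i j.

Lemma den_gt0 j (p : 'I_n -> R) : 0 < 1 + \sum_(k < n) expR (a k j - b k j * p k).
Proof. by apply: ltr_wpDr; [apply: sumr_ge0 => k _; apply: expR_ge0|]. Qed.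

Lemma demand_gt0 j p i : 0 < demand a b j p i.
Proof. by rewrite /demand divr_gt0 ?expR_gt0 ?den_gt0. Qed.

Lemma sum_demand_le1 j p : \sum_(i < n) demand a b j p i <= 1.
Proof.
rewrite /demand -mulr_suml ler_pdivrMr ?den_gt0 // mul1r lerDr //.
Qed.

Lemma keyL j (pj f : 'I_n -> R) q : (forall i, 0 < f i) ->
  (forall k, \sum_(i < n) demand a b j pj i * f i <= f k) -> 0 < q ->
  \sum_(i < n | q * f i <= pj i) demand a b j pj i * f i
   <= \sum_(i < n) demand a b j (fun i => q * f i) i * f i.
Proof.
move=> f0 hf q0.
set P := fun i : 'I_n => q * f i <= pj i.
set T := \sum_(i < n | P i) demand a b j pj i * f i.
set x := fun i => expR (a i j - b i j * pj i).
set y := fun i => expR (a i j - b i j * (q * f i)).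
have DX0 : 0 < 1 + \sum_(k < n) x k by apply: den_gt0.
have DY0 : 0 < 1 + \sum_(k < n) y k by apply: den_gt0.
have T0 : 0 <= T.
  by apply: sumr_ge0 => i _; rewrite mulr_ge0 ?ltW ?demand_gt0 ?f0.
have hTf : forall k, T <= f k.
  move=> k; apply: le_trans (hf k).
  rewrite [X in _ <= X](bigID P) /= lerDl.
  by apply: sumr_ge0 => i _; rewrite mulr_ge0 ?ltW ?demand_gt0 ?f0.
have hT : T * (1 + \sum_(k < n) x k) = \sum_(i < n | P i) x i * f i.
  rewrite /T mulr_suml; apply: eq_bigr => i _.
  change (x i / (1 + \sum_(k < n) x k) * f i * (1 + \sum_(k < n) x k) = x i * f i).
  field; exact: lt0r_neq0.
have e1 : \sum_(i < n) demand a b j (fun i => q * f i) i * f i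
        = (\sum_(i < n) y i * f i) / (1 + \sum_(k < n) y k).
  rewrite mulr_suml; apply: eq_bigr => i _.
  change (y i / (1 + \sum_(k < n) y k) * f i = y i * f i / (1 + \sum_(k < n) y k)).
  by rewrite mulrAC.
rewrite e1 ler_pdivlMr //.
have s1 : \sum_(i < n | P i) (f i - T) * x i <= \sum_(i < n) (f i - T) * y i.
  apply: (@le_trans _ _ (\sum_(i < n | P i) (f i - T) * y i)).
    apply: ler_sum => i Pi; rewrite ler_wpM2l ?subr_ge0 ?hTf // ler_expR.
    by rewrite lerB // ler_wpM2l // ltW.
  rewrite [X in _ <= X](bigID P) /= lerDl.
  by apply: sumr_ge0 => i _; rewrite mulr_ge0 ?subr_ge0 ?hTf ?expR_ge0.
have s2 : \sum_(i < n | P i) (f i - T) * x i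
   = \sum_(i < n | P i) x i * f i - T * \sum_(i < n | P i) x i.
  rewrite mulr_sumr -sumrB; apply: eq_bigr => i _; ring.
have s3 : \sum_(i < n) (f i - T) * y i
   = \sum_(i < n) y i * f i - T * \sum_(i < n) y i.
  rewrite mulr_sumr -sumrB; apply: eq_bigr => i _; ring.
have s4 : \sum_(k < n) x k = \sum_(k < n | P k) x k + \sum_(k < n | ~~ P k) x k.
  exact: bigID.
have s5 : 0 <= T * \sum_(k < n | ~~ P k) x k.
  by rewrite mulr_ge0 // sumr_ge0 // => i _; apply: expR_ge0.
move: s1 s5 hT; rewrite s2 s3 s4 => s1 s5 hT.
rewrite -hT in s1.
move: s1 s5; rewrite !mulrDr; lra.
Qed.

Lemma revjE j p : revj a b j p * (1 + \sum_(k < n) expR (a k j - b k j * p k))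
  = \sum_(k < n) p k * expR (a k j - b k j * p k).
Proof.
rewrite /revj mulr_suml; apply: eq_bigr => k _; rewrite /demand.
by field; apply: lt0r_neq0; apply: den_gt0.
Qed.

Lemma revj_ge0 j p : (forall k, 0 <= p k) -> 0 <= revj a b j p.
Proof.
by move=> p0; apply: sumr_ge0 => k _; apply: mulr_ge0; [apply: p0 | apply: ltW; apply: demand_gt0].
Qed.

Lemma foc j p i : (forall k, 0 <= p k) ->
  (forall p', (forall k, 0 <= p' k) -> revj a b j p' <= revj a b j p) ->
  p i = revj a b j p + (b i j)^-1.
Proof.
move=> p0 hmax.
set Rs := revj a b j p.
have Rs0 : 0 <= Rs by apply: revj_ge0.
set bi := b i j.
have bi0 : 0 < bi := hb i j.
set t := Rs + bi^-1.
pose p' := fun k => if k == i then t else p k.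
have p'0 : forall k, 0 <= p' k.
  move=> k; rewrite /p'; case: eqP => _ //.
  by rewrite addr_ge0 // invr_ge0 ltW.
have h := hmax p' p'0.
set x := fun k => expR (a k j - b k j * p k).
set x' := fun k => expR (a k j - b k j * p' k).
set A := \sum_(k < n | k != i) p k * x k.
set B := \sum_(k < n | k != i) x k.
have E1 : Rs * (1 + \sum_(k < n) x k) = \sum_(k < n) p k * x k.
  exact: (revjE j p).
have E2 : revj a b j p' * (1 + \sum_(k < n) x' k) = \sum_(k < n) p' k * x' k
.
  exact: (revjE j p').
have sx : \sum_(k < n) x k = x i + B by rewrite (bigD1 i).
have spx : \sum_(k < n) p k * x k = p i * x i + A by rewrite (bigD1 i).
have sx' : \sum_(k < n) x' k = x' i + B.
  rewrite (bigD1 i) //=; congr (_ + _); apply: eq_bigr => k ki.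
  by rewrite /x' /p' (negbTE ki).
have spx' : \sum_(k < n) p' k * x' k = t * x' i + A.
  rewrite (bigD1 i) //= {1}/p' eqxx; congr (_ + _); apply: eq_bigr => k ki.
  by rewrite /x' /p' (negbTE ki).
have D'0 : 0 < 1 + \sum_(k < n) x' k by apply: den_gt0.
have h2 : t * x' i + A <= Rs * (1 + (x' i + B)).
  by rewrite -spx' -sx' -E2 ler_pM2r.
rewrite sx spx in E1.
have key : x' i * (t - Rs) <= x i * (p i - Rs).
  move: h2 E1; rewrite /t !mulrDr; lra.
have tR : t - Rs = bi^-1 by rewrite /t; lra.
set u := p i - Rs.
have xE : x i = x' i * expR (1 - bi * u).
  rewrite /x /x' /p' eqxx -expRD; congr expR; rewrite /u /t -/bi; field.
  exact: lt0r_neq0.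
have x'0 : 0 < x' i by apply: expR_gt0.
rewrite tR xE -mulrA ler_pM2l // in key.
have key2 : 1 <= (bi * u) * expR (1 - bi * u).
  rewrite -/u in key.
  have h3 : bi * bi^-1 <= bi * (expR (1 - bi * u) * u) by rewrite ler_pM2l.
  have e : bi * bi^-1 = 1 by apply: mulfV; apply: lt0r_neq0.
  rewrite e in h3; apply: (le_trans h3).
  by rewrite [expR _ * u]mulrC mulrA.
set z := bi * u in key2.
have z1 : z = 1.
  apply/eqP; apply: contraT => zn1.
  have : 1 + (z - 1) < expR (z - 1) by apply: expR_gt1Dx; rewrite subr_eq0.
  rewrite addrC subrK => hz.
  have : z * expR (1 - z) < expR (z - 1) * expR (1 - z).
    by rewrite ltr_pM2r // expR_gt0.
  have e0 : z - 1 + (1 - z) = 0 by ring.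
  rewrite -expRD e0 expR0 => hz2.
  by move: (lt_le_trans hz2 key2); rewrite ltxx.
have : bi * u = 1 := z1.
rewrite /u => e.
have -> : p i = (bi * (p i - Rs)) / bi + Rs by field; apply: lt0r_neq0.
by rewrite e div1r addrC.
Qed.
End MNL.

Section Aux.
Local Open Scope classical_set_scope.
Variables (R : realType) (n m : nat).
Variables (theta : 'I_m -> R) (a b : 'I_n -> 'I_m -> R) (pbar : 'I_m -> 'I_n -> R).

Lemma totrev_le : (forall j, 0 < theta j) ->
  (forall j (p : 'I_n -> R), (forall i, 0 <= p i) -> revj a b j p <= revj a b j (pbar j)) ->
  forall p, (forall i, 0 <= p i) -> totrev theta a b p <= Rbar theta a b pbar.
Proof.
move=> ht hm p p0; rewrite /totrev /Rbar; apply: ler_sum => j _.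
by rewrite ler_wpM2l ?(ltW (ht j)) // /Rstarj; apply: hm.
Qed.

Lemma totrev_ge0 : (forall j, 0 < theta j) ->
  forall p, (forall i, 0 <= p i) -> 0 <= totrev theta a b p.
Proof.
move=> ht p p0; apply: sumr_ge0 => j _; apply: mulr_ge0; first exact: ltW.
exact: revj_ge0.
Qed.

Lemma Rf_ub : (forall j, 0 < theta j) ->
  (forall j (p : 'I_n -> R), (forall i, 0 <= p i) -> revj a b j p <= revj a b j (pbar j)) ->
  forall f, (forall i, 0 < f i) -> forall q, 0 < q ->
  totrev theta a b (fun i => q * f i) <= Rf theta a b f.
Proof.
move=> ht hm f f0 q q0; rewrite /Rf; apply: ub_le_sup; last by exists q.
exists (Rbar theta a b pbar) => x [q' q'0 <-].
by apply: (totrev_le ht hm) => i; apply: mulr_ge0; [exact: ltW | exact: ltW].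
Qed.

Lemma Rf_le_Rstar : (forall j, 0 < theta j) ->
  (forall j (p : 'I_n -> R), (forall i, 0 <= p i) -> revj a b j p <= revj a b j (pbar j)) ->
  forall f, (forall i, 0 < f i) -> Rf theta a b f <= Rstar theta a b.
Proof.
move=> ht hm f f0; rewrite /Rf; apply: ge_sup.
  exists (totrev theta a b (fun i => 1 * f i)); exists 1 => //; exact: ltr01.
move=> x [q q0 <-]; rewrite /Rstar; apply: ub_le_sup.
  exists (Rbar theta a b pbar) => y [p p0 <-]; exact: (totrev_le ht hm).
by exists (fun i => q * f i) => // i; apply: mulr_ge0; [exact: ltW | exact: ltW].
Qed.

Lemma Rf_ge0 : (forall j, 0 < theta j) ->
  (forall j (p : 'I_n -> R), (forall i, 0 <= p i) -> revj a b j p <= revj a b j (pbar j)) ->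
  forall f, (forall i, 0 < f i) -> 0 <= Rf theta a b f.
Proof.
move=> ht hm f f0; apply: le_trans (Rf_ub ht hm f f0 1 ltr01).
by apply: totrev_ge0 => // i; apply: mulr_ge0; [exact: ltW | exact: ltW].
Qed.

Lemma qmin_fin (f : 'I_n -> R) (i0 : 'I_n) (j0 : 'I_m) :
  exists t : 'I_n * 'I_m, qmin pbar f = pbar t.2 t.1 / f t.1 /\
    forall t' : 'I_n * 'I_m, pbar t.2 t.1 / f t.1 <= pbar t'.2 t'.1 / f t'.1.
Proof.
rewrite /qmin (@set2E _ _ _ (fun i j => pbar j i / f i)).
exact: (@inf_fin _ _ (fun t : 'I_n * 'I_m => pbar t.2 t.1 / f t.1) (i0, j0)).
Qed.

Lemma qmax_fin (f : 'I_n -> R) (i0 : 'I_n) (j0 : 'I_m) :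
  exists t : 'I_n * 'I_m, qmax pbar f = pbar t.2 t.1 / f t.1 /\
    forall t' : 'I_n * 'I_m, pbar t'.2 t'.1 / f t'.1 <= pbar t.2 t.1 / f t.1.
Proof.
rewrite /qmax (@set2E _ _ _ (fun i j => pbar j i / f i)).
exact: (@sup_fin _ _ (fun t : 'I_n * 'I_m => pbar t.2 t.1 / f t.1) (i0, j0)).
Qed.

Lemma robust_const i i0 : (forall j, pbar j i = pbar j i0) ->
  robust_factor pbar i = robust_factor pbar i0.
Proof.
move=> hc; rewrite /robust_factor /pL /pH.
rewrite (_ : [set x | exists j, x = pbar j i] = [set x | exists j, x = pbar j i0]) //.
by apply/seteqP; split => x [j ->]; exists j; rewrite hc.
Qed.

Lemma robust_pos i (j0 : 'I_m) : (forall j i, 0 < pbar j i) -> 0 < robust_factor pbar i.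
Proof.
move=> hp; rewrite /robust_factor /pL /pH sqrtr_gt0.
have [jl [-> _]] := @inf_fin _ _ (fun j => pbar j i) j0.
have [jh [-> _]] := @sup_fin _ _ (fun j => pbar j i) j0.
by rewrite mulr_gt0.
Qed.
End Aux.

Theorem corollary3 (R : realType) (n m : nat)
  (theta : 'I_m -> R) (a b : 'I_n -> 'I_m -> R) (pbar : 'I_m -> 'I_n -> R)
  (hn : (0 < n)%N)
  (htheta_pos : forall j, 0 < theta j)
  (htheta_sum : \sum_(j < m) theta j = 1)
  (hb : forall i j, 0 < b i j)
  (* (A0): R_j attains its maximum over p >= 0 at pbar j, with positive finite components *)
  (hpbar_pos : forall j i, 0 < pbar j i)
  (hpbar_max : forall j (p : 'I_n -> R), (forall i, 0 <= p i) ->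
                 revj a b j p <= revj a b j (pbar j)) :
  (* (i) *)
  (Rbar theta a b pbar <= beta pbar (@evec R n) * Rf theta a b (@evec R n)
   /\ beta pbar (@evec R n) * Rf theta a b (@evec R n)
        <= beta pbar (@evec R n) * Rstar theta a b)
  /\
  (* (ii) *)
  ((forall j, exists bj : R, forall k, b k j = bj) ->
     (exists c : R, 0 < c /\ forall i, econ_factor theta a b pbar i = c * @evec R n i)
     /\ (exists c : R, 0 < c /\ forall i, robust_factor pbar i = c * @evec R n i))
  /\
  (* (iii) *)
  (forall f : 'I_n -> R, (forall i, 0 < f i) ->
     (forall j (k : 'I_n), \sum_(i < n) demand a b j (pbar j) i * f i <= f k) ->
     Rbar theta a b pbar <= beta pbar f * Rf theta a b f
     /\ beta pbar f * Rf theta a b f <= beta pbar f * Rstar theta a b).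
Proof.
have m0 : (0 < m)%N.
  case: (posnP m) => // m0; exfalso.
  move: htheta_sum; rewrite big1 => [|j]; last by move: (ltn_ord j); move: (nat_of_ord j) => k; rewrite m0.
  by move/eqP; rewrite eq_sym oner_eq0.
pose j0 : 'I_m := Ordinal m0.
pose i0 : 'I_n := Ordinal hn.
have part3 : forall f : 'I_n -> R, (forall i, 0 < f i) ->
     (forall j (k : 'I_n), \sum_(i < n) demand a b j (pbar j) i * f i <= f k) ->
     Rbar theta a b pbar <= beta pbar f * Rf theta a b f
     /\ beta pbar f * Rf theta a b f <= beta pbar f * Rstar theta a b.
  move=> f f0 hcond.
  have [tm [Emin minP]] := @qmin_fin _ _ _ pbar f i0 j0.
  have [tM [Emax maxP]] := @qmax_fin _ _ _ pbar f i0 j0.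
  set L := qmin pbar f in Emin *.
  set M := qmax pbar f in Emax *.
  have L0 : 0 < L by rewrite Emin divr_gt0.
  have LM : L <= M by rewrite Emin Emax; apply: minP.
  have hln : 0 <= ln (M / L) by apply: ln_ge0; rewrite ler_pdivlMr // mul1r.
  have hbeta : beta pbar f = 1 + ln (M / L) by [].
  have S0 := @Rf_ge0 _ _ _ theta a b pbar htheta_pos hpbar_max f f0.
  split; last first.
    apply: ler_wpM2l; last exact: (@Rf_le_Rstar _ _ _ theta a b pbar htheta_pos hpbar_max f f0).
    rewrite /beta -/L -/M; apply: addr_ge0 => //; exact: ler01.
  pose T := ('I_m * 'I_n)%type.
  pose c := fun t : T => theta t.1 * (demand a b t.1 (pbar t.1) t.2 * f t.2).
  pose r := fun t : T => pbar t.1 t.2 / f t.2.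
  have c0 : forall t, 0 <= c t.
    move=> t; apply: mulr_ge0; first exact: ltW.
    by apply: mulr_ge0; apply: ltW; [apply: demand_gt0 | apply: f0].
  have rL : forall t, L <= r t by move=> [j i]; rewrite Emin; apply: (minP (i, j)).
  have rM : forall t, r t <= M by move=> [j i]; rewrite Emax; apply: (maxP (i, j)).
  have eqS : forall q, 0 < q -> \sum_(t in [set: T] | q <= r t) c t =
      \sum_(j < m) theta j * \sum_(i < n | q * f i <= pbar j i) (demand a b j (pbar j) i * f i).
    move=> q q0.
    rewrite (eq_bigl (fun t => q <= r t)); last by move=> t; rewrite finset.in_setT.
    rewrite big_mkcond /=.
    under [RHS]eq_bigr do rewrite big_mkcond mulr_sumr.
    rewrite pair_big /=; apply: eq_bigr => t _.
    rewrite /r ler_pdivlMr //.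
    by case: ifP => _; rewrite ?mulr0.
  have hyp : forall q, 0 < q -> q <= M ->
      q * (\sum_(t in [set: T] | q <= r t) c t + 0) <= Rf theta a b f.
    move=> q q0 _; rewrite addr0 eqS //.
    apply: le_trans (@Rf_ub _ _ _ theta a b pbar htheta_pos hpbar_max f f0 q q0).
    have -> : totrev theta a b (fun i => q * f i) = q * \sum_(j < m) theta j *
        \sum_(i < n) demand a b j (fun i => q * f i) i * f i.
      rewrite /totrev /revj mulr_sumr; apply: eq_bigr => j _.
      rewrite mulrCA; congr (_ * _); rewrite mulr_sumr; apply: eq_bigr => i _.
      by ring.
    rewrite ler_pM2l //; apply: ler_sum => j _.
    rewrite ler_pM2l //.
    exact: (@keyL _ _ _ a b hb j (pbar j) f q f0 (hcond j) q0).
  have := @comb_gen _ T c r L (Rf theta a b f) L0 S0 c0 rL #|[set: T]| [set: T] 0 M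
     (leqnn _) (lexx 0) LM (fun t _ => rM t) hyp.
  rewrite mul0r addr0 hbeta mulrC.
  have -> : \sum_(t in [set: T]) c t * r t = Rbar theta a b pbar.
    rewrite (eq_bigl predT); last by move=> t; rewrite finset.in_setT.
    rewrite /Rbar /Rstarj /revj.
    under [RHS]eq_bigr do rewrite mulr_sumr.
    rewrite pair_big /=; apply: eq_bigr => t _.
    rewrite /c /r; field; apply: lt0r_neq0; exact: f0.
  by [].
split.
  apply: part3 => [i|j k]; first exact: ltr01.
  under eq_bigr do rewrite /evec mulr1.
  exact: sum_demand_le1.
split; last exact: part3.
move=> hbj.
have hconst : forall j i, pbar j i = pbar j i0.
  move=> j i; have [bj hbj'] := hbj j.
  have p0 : forall k, 0 <= pbar j k by move=> k; apply: ltW.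
  rewrite (@foc _ _ _ a b hb j (pbar j) i p0 (hpbar_max j)).
  by rewrite (@foc _ _ _ a b hb j (pbar j) i0 p0 (hpbar_max j)) !hbj'.
split.
  exists (econ_factor theta a b pbar i0); split; last first.
    move=> i; rewrite /evec mulr1 /econ_factor; apply: eq_bigr => j _.
    by rewrite hconst.
  have Rsj : forall j, 0 < Rstarj a b pbar j.
    move=> j; rewrite /Rstarj /revj (bigD1 i0) //=.
    apply: (lt_le_trans (_ : 0 < pbar j i0 * demand a b j (pbar j) i0)).
      by rewrite mulr_gt0 // demand_gt0.
    rewrite lerDl; apply: sumr_ge0 => i _; apply: mulr_ge0; apply: ltW => //.
    exact: demand_gt0.
  have Rb : 0 < Rbar theta a b pbar.
    rewrite /Rbar (bigD1 j0) //=.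
    apply: (lt_le_trans (_ : 0 < theta j0 * Rstarj a b pbar j0)).
      by rewrite mulr_gt0.
    rewrite lerDl; apply: sumr_ge0 => j _; apply: mulr_ge0; apply: ltW => //.
  have al : forall j, 0 < alpha theta a b pbar j.
    by move=> j; rewrite /alpha divr_gt0 // mulr_gt0.
  rewrite /econ_factor (bigD1 j0) //=.
  apply: (lt_le_trans (_ : 0 < alpha theta a b pbar j0 * pbar j0 i0)).
    by rewrite mulr_gt0.
  rewrite lerDl; apply: sumr_ge0 => j _; apply: mulr_ge0; apply: ltW => //.
exists (robust_factor pbar i0); split.
  exact: (@robust_pos _ _ _ pbar i0 j0 hpbar_pos).
move=> i; rewrite /evec mulr1.
by apply: robust_const => j; apply: hconst.
Qed.
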